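(* Let $m\ge3$ be odd and $n\ge2$. Every completely positive tensor $\mathcal{A}\in S_{m,n}$ is strongly positive semi-definite. Furthermore, suppose $\mathcal{A}=\sum_{l=1}^r(\mathbf{u}^{(l)})^m$ with nonnegative vectors $\mathbf{u}^{(1)},\dots,\mathbf{u}^{(r)}\in\mathbb{R}^n$, and for each $i\in\{1,\dots,n\}$ let $\Gamma_i=\{l\in\{1,\dots,r\}: u^{(l)}_i\ne 0\}$. If the vectors $\{\mathbf{u}^{(l)}: l\in\Gamma_i\}$ span $\mathbb{R}^n$ (i.e. the matrix with these columns has rank $n$) for every $i\in\{1,\dots,n\}$, then $\mathcal{A}$ is strongly positive definite.
   Context: $S_{m,n}$ is the set of real symmetric $m$th order $n$-dimensional tensors. For $\mathbf{u}\in\mathbb{R}^n$, $\mathbf{u}^m$ is the tensor with entries $u_{i_1}\cdots u_{i_m}$. A tensor is completely positive if it equals $\sum_{l=1}^r(\mathbf{u}^{(l)})^m$ for some positive integer $r$ and nonnegative vectors $\mathbf{u}^{(l)}\in\mathbb{R}^n$. For $\mathbf{x}\in\mathbb{R}^n$, $\mathcal{A}\mathbf{x}^{m-1}$ is the vector with $i$th component $\sum_{i_2,\dots,i_m}a_{ii_2\dots i_m}x_{i_2}\cdots x_{i_m}$. For odd $m$, $\mathcal{A}\in S_{m,n}$ is strongly positive semi-definite if $\mathcal{A}\mathbf{x}^{m-1}\ge\mathbf{0}$ componentwise for all $\mathbf{x}\in\mathbb{R}^n$, and strongly positive definite if $\mathcal{A}\mathbf{x}^{m-1}>\mathbf{0}$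 componentwise for all nonzero $\mathbf{x}$. *)

(* Defs.v *)
From mathcomp Require Import all_boot all_order all_algebra.
From mathcomp Require Import perm.
Set Implicit Arguments. Unset Strict Implicit. Unset Printing Implicit Defensive.
Import Order.TTheory GRing.Theory Num.Theory.
Local Open Scope ring_scope.

(* A real m-th order n-dimensional tensor: entries indexed by
   (i_1,...,i_m), encoded as a finite function 'I_m -> 'I_n. *)
Definition tensor (R : Type) (m n : nat) := {ffun 'I_m -> 'I_n} -> R.

Definition symmetric_tensor (R : Type) (m n : nat) (A : tensor R m n) : Prop :=
  forall (s : {perm 'I_m}) (f : {ffun 'I_m -> 'I_n}),
    A [ffun k => f (s k)] = A f.

Definition tpow (R : pzRingType) (m n : nat) (u : 'I_n -> R) : tensor R m n :=
  fun f => \prod_(k : 'I_m) u (f k).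
Arguments tpow {R} m {n} u.

Definition tsum_pow (R : pzRingType) (m n r : nat) (u : 'I_r -> 'I_n -> R)
  : tensor R m n := fun f => \sum_(l < r) tpow m (u l) f.
Arguments tsum_pow {R} m {n r} u.

Definition completely_positive (R : numDomainType) (m n : nat)
  (A : tensor R m n) : Prop :=
  exists r : nat, exists u : 'I_r -> 'I_n -> R,
    (0 < r)%N /\ (forall l i, 0 <= u l i) /\ A = tsum_pow m u.

(* (A x^{m-1})_i = sum_{i_2..i_m} a_{i i_2 .. i_m} x_{i_2} ... x_{i_m};
   the first index position is the one with value 0 in 'I_m. *)
Definition tapply (R : pzRingType) (m n : nat) (A : tensor R m n)
  (x : 'I_n -> R) (i : 'I_n) : R :=
  \sum_(f : {ffun 'I_m -> 'I_n} | [forall k : 'I_m, (val k == 0%N) ==> (f k == i)])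
     A f * \prod_(k : 'I_m | val k != 0%N) x (f k).

Definition strongly_psd (R : numDomainType) (m n : nat) (A : tensor R m n) : Prop :=
  forall x : 'I_n -> R, forall i, 0 <= tapply A x i.

Definition strongly_pd (R : numDomainType) (m n : nat) (A : tensor R m n) : Prop :=
  forall x : 'I_n -> R, (exists j, x j != 0) -> forall i, 0 < tapply A x i.

(* Main.v *)
Require Import Defs.
From mathcomp Require Import all_boot all_order all_algebra.
From mathcomp Require Import perm.
Import Order.TTheory GRing.Theory Num.Theory.
Local Open Scope ring_scope.

Lemma key (R : comPzRingType) m' n (g : 'I_n -> R) (i : 'I_n) :
  \sum_(f : {ffun 'I_m'.+1 -> 'I_n} | [forall k : 'I_m'.+1, (val k == 0%N) ==> (f k == i)])
     \prod_(k : 'I_m'.+1 | val k != 0%N) g (f k) = (\sum_j g j) ^+ m'.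
Proof.
pose F (k : 'I_m'.+1) (j : 'I_n) : R := if k == ord0 then (j == i)%:R else g j.
have H := @bigA_distr_bigA R 0 1 *%R +%R _ _ F.
have L : \prod_(k < m'.+1) \sum_j F k j = (\sum_j g j) ^+ m'.
  rewrite big_ord_recl /F eqxx.
  rewrite (bigD1 i) //= eqxx big1 ?addr0 ?mul1r; last first.
    by move=> j /negbTE ->.
  rewrite -[in RHS](card_ord m') -prodr_const; apply: eq_bigr => k _.
  by [].
rewrite -L H big_mkcond /=; apply: eq_bigr => f _.
rewrite [RHS](bigD1 ord0) //= /F eqxx.
have -> : [forall k : 'I_m'.+1, (val k == 0%N) ==> (f k == i)] = (f ord0 == i).
  apply/forallP/idP => [/(_ ord0) //| /eqP fi k]; apply/implyP => k0.
  have -> : k = ord0 by apply: val_inj; apply/eqP. by rewrite fi.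
case: eqP => _; last by rewrite mul0r.
rewrite mul1r; apply: eq_big => k; first by [].
by move=> kn0; have /negbTE -> : k != ord0 := kn0.
Qed.

Lemma tapply_sum (R : comPzRingType) m' n r (u : 'I_r -> 'I_n -> R) x i :
  tapply (tsum_pow m'.+1 u) x i =
  \sum_(l < r) u l i * (\sum_j u l j * x j) ^+ m'.
Proof.
rewrite /tapply.
transitivity (\sum_(f : {ffun 'I_m'.+1 -> 'I_n} | [forall k : 'I_m'.+1, (val k == 0%N) ==> (f k == i)])
   \sum_(l < r) u l i * \prod_(k : 'I_m'.+1 | val k != 0%N) (u l (f k) * x (f k))).
  apply: eq_bigr => f /forallP /(_ ord0) /= /eqP f0.
  rewrite /tsum_pow mulr_suml; apply: eq_bigr => l _.
  rewrite /tpow (bigD1 ord0) //= f0 -mulrA big_split /=; congr (_ * (_ * _)).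
rewrite exchange_big /=; apply: eq_bigr => l _.
by rewrite -mulr_sumr (@key _ _ _ (fun j => u l j * x j)).
Qed.

Theorem theorem3p4 (R : realFieldType) (m n : nat) :
  (3 <= m)%N -> odd m -> (2 <= n)%N ->
  (forall A : tensor R m n, symmetric_tensor A ->
     completely_positive A -> strongly_psd A)
  /\
  (forall (r : nat) (u : 'I_r -> 'I_n -> R),
     (0 < r)%N ->
     (forall l i, 0 <= u l i) ->
     (forall i : 'I_n,
        \rank (\sum_(l < r | u l i != 0) <<\row_(k < n) u l k>>)%MS = n) ->
     strongly_pd (tsum_pow m u)).
Proof.
case: m => [//|m'] _ /= om' _.
have ge0 : forall r (u : 'I_r -> 'I_n -> R), (forall l i, 0 <= u l i) ->
    forall l i x, 0 <= u l i * (\sum_j u l j * x j) ^+ m'.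
  by move=> r u u0 l i x; rewrite mulr_ge0 // exprn_even_ge0.
split.
  move=> A _ [r [u [_ [u0 ->]]]] x i; rewrite tapply_sum.
  by apply: sumr_ge0 => l _; apply: ge0.
move=> r u _ u0 rk x [j xj] i; rewrite tapply_sum.
rewrite lt_def sumr_ge0 ?andbT; last by move=> l _; apply: ge0.
apply/eqP => S0.
have Z := psumr_eq0P (fun l _ => ge0 _ _ u0 l i x) S0.
pose cx := \col_(j < n) x j.
have sub : (\sum_(l < r | u l i != 0) <<\row_(k < n) u l k>> <= kermx cx)%MS.
  apply/sumsmx_subP => l uli; rewrite genmxE sub_kermx.
  have /eqP := Z l isT; rewrite mulf_eq0 (negbTE uli) /= expf_eq0 => /andP [_ /eqP s0].
  apply/eqP/matrixP => a b; rewrite !mxE (ord1 a) (ord1 b) -[RHS]s0.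
  by apply: eq_bigr => k _; rewrite !mxE.
have : (1%:M <= kermx cx)%MS.
  apply: submx_trans sub; rewrite sub1mx /row_full rk.
  done.
rewrite sub_kermx mul1mx => /eqP /matrixP /(_ j 0).
by rewrite !mxE => xj0; rewrite xj0 eqxx in xj.
Qed.
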